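(* Let $\mathcal{I}$ be an interval hypergraph on $[n]$ containing all singletons. Then $P_{\mathcal{I}}$ is a distributive lattice if and only if $P_{\mathcal{I}}$ is isomorphic to a Cartesian product of chains.
   Context: An interval hypergraph on $[n]$ is a collection of intervals of $[n]$, by convention containing all singletons. An orientation is a map $O:\mathcal{I}\to[n]$ with $O(I)\in I$; it is acyclic if there are no $H_1,\dots,H_k$, $k\ge2$, with $O(H_{i+1})\in H_i\setminus\{O(H_i)\}$ for $i\in[k-1]$ and $O(H_1)\in H_k\setminus\{O(H_k)\}$. Orientations $O\ne O'$ are related by an increasing flip (from $O$ to $O'$) if there exist $1\le i<j\le n$ such that for all $H$: if $O(H)\ne O'(H)$ then $O(H)=i$, $O'(H)=j$; and if $\{i,j\}\subseteq H$ then $O(H)=i\iff O'(H)=j$. $P_{\mathcal{I}}$ is the transitive closure of the increasing flip relation on the acyclic orientations of $\mathcal{I}$. *)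

(* Defs.v *)
(* Vertices [n] are represented by 'I_n (0-indexed). *)
From Stdlib Require Import Relations.
From mathcomp Require Import all_boot.
Set Implicit Arguments. Unset Strict Implicit. Unset Printing Implicit Defensive.

Definition intv n (h : 'I_n * 'I_n) : {set 'I_n} :=
  [set k : 'I_n | (h.1 <= k) && (k <= h.2)].

Definition interval_hypergraph n (H : {set 'I_n * 'I_n}) : Prop :=
  (forall h, h \in H -> h.1 <= h.2) /\ (forall a : 'I_n, (a, a) \in H).

Notation edge H := {h | h \in H}.

Definition is_orientation n (H : {set 'I_n * 'I_n}) (O : {ffun edge H -> 'I_n}) : Prop :=
  forall e : edge H, O e \in intv (val e).

Definition cyc_step n (H : {set 'I_n * 'I_n}) (O : {ffun edge H -> 'I_n})
  (e1 e2 : edge H) : bool :=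
  (O e2 \in intv (val e1)) && (O e2 != O e1).

Definition is_acyclic n (H : {set 'I_n * 'I_n}) (O : {ffun edge H -> 'I_n}) : Prop :=
  ~ exists s : seq (edge H), 2 <= size s /\ cycle (cyc_step O) s.

Definition incr_flip n (H : {set 'I_n * 'I_n}) (O O' : {ffun edge H -> 'I_n}) : Prop :=
  O <> O' /\
  exists i j : 'I_n, i < j /\
    forall e : edge H,
      (O e <> O' e -> O e = i /\ O' e = j) /\
      ((i \in intv (val e)) && (j \in intv (val e)) -> (O e = i <-> O' e = j)).

Definition acyc_orient n (H : {set 'I_n * 'I_n}) : Type :=
  {O : {ffun edge H -> 'I_n} | is_orientation O /\ is_acyclic O}.

Definition P_le n (H : {set 'I_n * 'I_n}) : relation (acyc_orient H) :=
  clos_refl_trans (acyc_orient H)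
    (fun O O' => incr_flip (proj1_sig O) (proj1_sig O')).

Definition is_poset (T : Type) (le : relation T) : Prop :=
  (forall x, le x x) /\ (forall x y, le x y -> le y x -> x = y) /\
  (forall x y z, le x y -> le y z -> le x z).

Definition is_meet (T : Type) (le : relation T) (x y z : T) : Prop :=
  le z x /\ le z y /\ forall w, le w x -> le w y -> le w z.

Definition is_join (T : Type) (le : relation T) (x y z : T) : Prop :=
  le x z /\ le y z /\ forall w, le x w -> le y w -> le z w.

Definition distributive_lattice (T : Type) (le : relation T) : Prop :=
  is_poset le /\
  exists meet join : T -> T -> T,
    (forall x y, is_meet le x y (meet x y)) /\
    (forall x y, is_join le x y (join x y)) /\
    (forall x y z, meet x (join y z) = join (meet x y) (meet x z)).

Definition iso_product_of_chains (T : Type) (le : relation T) : Prop :=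
  exists (k : nat) (m : 'I_k -> nat) (f : T -> forall i : 'I_k, 'I_(m i).+1),
    bijective f /\
    forall x y, le x y <-> (forall i, f x i <= f y i).

(* Main.v *)
Require Import Defs.
From Stdlib Require Import Relations ProofIrrelevance FunctionalExtensionality.
From mathcomp Require Import all_boot.
From mathcomp Require Import zify.
Set Implicit Arguments. Unset Strict Implicit. Unset Printing Implicit Defensive.

Section Basic.
Variable n : nat.
Variable H : {set 'I_n * 'I_n}.
Notation ori := {ffun edge H -> 'I_n}.

Lemma in_intv (h : 'I_n * 'I_n) (k : 'I_n) : (k \in intv h) = (h.1 <= k <= h.2).
Proof. by rewrite inE. Qed.

Lemma hrel_irr (O : ori) e : cyc_step O e e = false.
Proof. by rewrite /cyc_step eqxx andbF. Qed.

Lemma acyc_hrel (O : ori) :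
  is_acyclic O <-> (forall e1 e2, cyc_step O e1 e2 -> ~~ connect (cyc_step O) e2 e1).
Proof.
split.
- move=> hA e1 e2 h12; apply/negP => /connectP [p hp hl].
  apply: hA; exists (e2 :: p); split.
    case: p hp hl => [|a p] /= hp hl; last by [].
    by move: h12; rewrite -hl hrel_irr.
  rewrite /cycle rcons_path hp /= -hl; done.
- move=> hC [s [hs hc]].
  case: s hs hc => [|a [|b s]] //= _.
  rewrite rcons_path => /andP [/andP [hab hp] hl].
  have hab' : cyc_step O a b by rewrite /cyc_step hab hp.
  have := hC a b hab'; apply/negP; rewrite negbK; apply/connectP.
  exists (rcons s a); first by rewrite rcons_path.
  by rewrite last_rcons.
Qed.

Lemma two_cycle (O : ori) e1 e2 : is_acyclic O ->
  O e2 \in intv (val e1) -> O e2 != O e1 -> O e1 \in intv (val e2) -> False.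
Proof.
move=> hA h1 h2 h3; apply: hA; exists [:: e1; e2]; split => //=.
by rewrite /cyc_step h1 h2 h3 eq_sym h2.
Qed.

Definition vrel (O : ori) : rel 'I_n := fun u v =>
  [exists e, (u \in intv (val e)) && (O e == v) && (u != v)].

Lemma vrelP (O : ori) u v :
  reflect (exists e, [/\ u \in intv (val e), O e = v & u != v]) (vrel O u v).
Proof.
apply: (iffP existsP) => [[e /andP [/andP [a /eqP b] c]]|[e [a b c]]]; exists e => //.
by rewrite a b eqxx c.
Qed.

Lemma hrel_vrel (O : ori) e1 e2 : cyc_step O e1 e2 -> vrel O (O e2) (O e1).
Proof. by move=> /andP [a b]; apply/vrelP; exists e1. Qed.

Lemma connect_hv (O : ori) e1 e2 : connect (cyc_step O) e1 e2 -> connect (vrel O) (O e2) (O e1).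
Proof.
move=> /connectP [p hp ->]; elim: p e1 hp => [|a p IH] e1 /=; first by rewrite connect0.
move=> /andP [h1 hp]; apply: connect_trans (IH _ hp) _.
by apply: connect1; apply: hrel_vrel.
Qed.

Lemma path_vh (O : ori) p a : path (vrel O) a p -> forall e, O e = a ->
  exists e', connect (cyc_step O) e' e /\ O e' = last a p.
Proof.
elim: p a => [|b p IH] a /=; first by move=> _ e he; exists e; rewrite connect0.
move=> /andP [/vrelP [f [hf1 hf2 hf3]] hp] e he.
have [e' [c1 c2]] := IH _ hp f hf2; exists e'; split => //.
apply: connect_trans c1 (connect1 _).
by rewrite /cyc_step he hf1 hf2 hf3.
Qed.

Lemma acyc_vrel (O : ori) :
  is_acyclic O <-> (forall u v, vrel O u v -> ~~ connect (vrel O) v u).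
Proof.
split.
- move=> hA u v /vrelP [e [h1 h2 h3]]; apply/negP => /connectP [p hp hl].
  have [e' [c1 c2]] := path_vh hp h2.
  have hh : cyc_step O e e' by rewrite /cyc_step c2 -hl h1 h2 h3.
  by move/acyc_hrel: hA => /(_ _ _ hh); rewrite c1.
- move=> hV; apply/acyc_hrel => e1 e2 h12; apply/negP => c.
  by have := hV _ _ (hrel_vrel h12); rewrite (connect_hv c).
Qed.

Lemma acyc_height (O : ori) (h : 'I_n -> nat) :
  (forall e u, u \in intv (val e) -> u != O e -> h u < h (O e)) -> is_acyclic O.
Proof.
move=> hh; apply/acyc_vrel => u v huv.
have key : forall a b, connect (vrel O) a b -> h a <= h b.
  move=> a b /connectP [p hp ->]; elim: p a hp => [|c p IH] a //= /andP [/vrelP [e [e1 e2 e3]] hp].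
  apply: leq_trans (IH _ hp); apply: ltnW; rewrite -e2; apply: hh => //; by rewrite e2.
move: huv => /vrelP [e [e1 e2 e3]].
have lt : h u < h v by rewrite -e2; apply: hh => //; rewrite e2.
apply/negP => /key; by rewrite leqNgt lt.
Qed.

End Basic.

Section Flip.
Variable n : nat.
Variable H : {set 'I_n * 'I_n}.
Notation ori := {ffun edge H -> 'I_n}.

Lemma intv_conv (h : 'I_n * 'I_n) (a b k : 'I_n) :
  a \in intv h -> b \in intv h -> a <= k <= b -> k \in intv h.
Proof. rewrite !in_intv; lia. Qed.

Variables x y : ori.
Hypothesis xo : is_orientation x.
Hypothesis yo : is_orientation y.
Hypothesis xa : is_acyclic x.
Hypothesis ya : is_acyclic y.
Hypothesis xy : forall e, x e <= y e.
Variables (i j : 'I_n) (ej : edge H).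
Hypothesis hmax : forall e, x e != y e -> x e <= i.
Hypothesis hjmax : forall e, x e != y e -> x e = i -> y e <= j.
Hypothesis hDej : x ej != y ej.
Hypothesis hxej : x ej = i.
Hypothesis hyej : y ej = j.

Lemma hij : i < j.
Proof. have := xy ej; rewrite hxej hyej ltn_neqAle => ->; rewrite andbT. by rewrite -hxej -hyej. Qed.

Lemma j_ej : j \in intv (val ej). Proof. by rewrite -hyej; apply: yo. Qed.
Lemma i_ej : i \in intv (val ej). Proof. by rewrite -hxej; apply: xo. Qed.

Definition chg e := (x e == i) && (j \in intv (val e)).

Lemma F1 e : i \in intv (val e) -> j \in intv (val e) -> x e != j.
Proof.
move=> hi hj; apply/eqP => hx.
apply: (two_cycle xa (e1 := ej) (e2 := e)); rewrite ?hx ?hxej //.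
- exact: j_ej.
- by rewrite eq_sym neq_ltn hij.
Qed.

Lemma F2 e : chg e -> y e = j.
Proof.
move=> /andP [/eqP hx hj].
have hlt : ~ (y e < j).
  move=> hlt; apply: (two_cycle ya (e1 := ej) (e2 := e)); rewrite ?hyej //.
  - apply: (intv_conv i_ej j_ej); rewrite -hx xy /=; exact: ltnW.
  - by rewrite neq_ltn hlt.
have hD : x e != y e.
  apply/negP => /eqP hxy; apply: hlt; by rewrite -hxy hx hij.
apply: val_inj; apply/eqP; rewrite /= eqn_leq hjmax //; rewrite leqNgt; apply/negP => h; exact: hlt h.
Qed.

Definition x1 : ori := [ffun e => if chg e then j else x e].

Lemma x1o : is_orientation x1.
Proof. move=> e; rewrite ffunE; case: ifP => [/andP [] //|_]; exact: xo. Qed.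

Lemma x_x1 e : x e <= x1 e.
Proof. rewrite ffunE; case: ifP => // /andP [/eqP -> _]; exact: ltnW hij. Qed.

Lemma x1_y e : x1 e <= y e.
Proof. rewrite ffunE; case: ifP => [h|_]; first by rewrite (F2 h). exact: xy. Qed.

Lemma chg_ej : chg ej.
Proof. by rewrite /chg hxej eqxx j_ej. Qed.

Lemma x1_ej : x ej < x1 ej.
Proof. by rewrite ffunE chg_ej hxej hij. Qed.

Lemma x1_flip : incr_flip x x1.
Proof.
split.
  move=> he; have := x1_ej; by rewrite he ltnn.
exists i, j; split; first exact: hij.
move=> e; split.
- rewrite ffunE; case: ifP => [/andP [/eqP -> _]|] // _; by case.
- move=> /andP [hi hj]; rewrite ffunE; split.
    move=> hx; by rewrite /chg hx eqxx hj.
  case: ifP => [/andP [/eqP -> _]|_ hx] //.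
  by move: (F1 hi hj); rewrite hx eqxx.
Qed.

Definition Eu : rel 'I_n := fun u v =>
  [exists e, ~~ chg e && (u \in intv (val e)) && (x e == v) && (u != v)].
Definition T (v : 'I_n) := (v != j) && [exists e, chg e && (v \in intv (val e))].
Definition E' : rel 'I_n := fun u v => Eu u v && ~~ T u.

Lemma EuP u v : reflect (exists e, [/\ ~~ chg e, u \in intv (val e), x e = v & u != v]) (Eu u v).
Proof.
apply: (iffP existsP) => [[e /andP [/andP [/andP [a b] /eqP c] d]]|[e [a b c d]]]; exists e => //.
by rewrite a b c eqxx d.
Qed.

Lemma TP v : reflect (v != j /\ exists e, chg e /\ v \in intv (val e)) (T v).
Proof.
apply: (iffP andP) => [[a /existsP [e /andP [b c]]]|[a [e [b c]]]]; split => //.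
  by exists e.
by apply/existsP; exists e; rewrite b c.
Qed.

Lemma Eu_x u v : Eu u v -> vrel x u v.
Proof. move=> /EuP [e [a b c d]]; apply/vrelP; by exists e. Qed.

Lemma Eu_x1 u v : Eu u v -> vrel x1 u v.
Proof. move=> /EuP [e [a b c d]]; apply/vrelP; exists e; by rewrite ffunE (negbTE a). Qed.

Lemma V1 u v : vrel x1 u v -> Eu u v \/ (T u /\ v = j).
Proof.
move=> /vrelP [e [a b c]]; move: b; rewrite ffunE; case: ifP => hc b.
- right; split; last by rewrite b.
  apply/TP; split; first by rewrite b.
  by exists e.
- left; apply/EuP; exists e; by rewrite hc.
Qed.

Lemma conn_sub (r1 r2 : rel 'I_n) : (forall a b, r1 a b -> r2 a b) ->
  forall a b, connect r1 a b -> connect r2 a b.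
Proof.
move=> hs a b /connectP [p hp ->]; apply/connectP; exists p => //.
elim: p a hp => //= c p IH a /andP [h1 h2]; by rewrite hs // IH.
Qed.

Lemma R3 a b : connect (vrel x1) a b ->
  connect Eu a b \/ (exists t, [/\ T t, connect (vrel x1) a t & connect Eu j b]).
Proof.
move=> /connectP [p hp ->]; elim: p a hp => [|c p IH] a /=; first by left; rewrite connect0.
move=> /andP [hac hp]; have [h|[t [t1 t2 t3]]] := IH _ hp.
- case: (V1 hac) => [hE|[hT hc]].
    by left; apply: connect_trans (connect1 hE) h.
  right; exists a; split => //; by rewrite -hc.
- right; exists t; split => //; exact: connect_trans (connect1 hac) t2.
Qed.

Lemma first_hit p a : path Eu a p -> ~~ T a -> T (last a p) ->
  exists w, T w /\ connect E' a w.
Proof.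
elim: p a => [|b p IH] a /=; first by move=> _ h1 h2; rewrite h2 in h1.
move=> /andP [hab hp] ha hl.
have hE : E' a b by rewrite /E' hab ha.
case hb: (T b); first by exists b; split => //; exact: connect1.
have [w [w1 w2]] := IH _ hp (negbT hb) hl; exists w; split => //.
exact: connect_trans (connect1 hE) w2.
Qed.

Lemma xcyc u v : vrel x u v -> connect (vrel x) v u -> False.
Proof. move=> h1 h2; by move/acyc_vrel: xa => /(_ _ _ h1); rewrite h2. Qed.

Section Main.
Variable w : 'I_n.
Variable Hc : edge H.
Hypothesis hcw : chg Hc.
Hypothesis wHc : w \in intv (val Hc).
Hypothesis wj : w != j.

Lemma TW : T w. Proof. apply/TP; split => //; by exists Hc. Qed.

Lemma jHc : j \in intv (val Hc). Proof. by case/andP: hcw. Qed.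
Lemma xHc : x Hc = i. Proof. by case/andP: hcw => /eqP. Qed.

Lemma step_common v v' p : E' v v' -> path E' v' p -> last v' p = w -> v' != w ->
  [/\ ~~ T v', connect (vrel x) v' w &
     exists G, [/\ ~~ chg G, v \in intv (val G), x G = v' & v != v']].
Proof.
move=> /andP [/EuP [G [g1 g2 g3 g4]] hv] hp hl hv'w.
case: p hp hl => [|c p] /=; first by move=> _ h; rewrite h eqxx in hv'w.
move=> /andP [hE hp] hl; split => //.
- by case/andP: hE.
- apply: (conn_sub Eu_x); apply: (conn_sub (r1 := E')); first by move=> ? ? /andP [].
  apply/connectP; exists (c :: p) => //=; by rewrite hp hE.
- by exists G.
Qed.

Lemma aux_lt p v : w < j -> path E' v p -> last v p = w -> w < v -> ~~ T v -> False.
Proof.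
move=> wltj; elim: p v => [|v' p IH] v /=; first by move=> _ -> ; rewrite ltnn.
move=> /andP [hE hp] hl hwv hTv.
case: (eqVneq v' w) => hv'w.
-
  subst v'; case/andP: hE => /EuP [G [g1 g2 g3 g4]] _.
  have hvj : j <= v.
    rewrite leqNgt; apply/negP => hvj; move/negP: hTv; apply; apply/TP; split.
      by rewrite neq_ltn hvj.
    exists Hc; split => //; apply: (intv_conv wHc jHc); lia.
  have wG : w \in intv (val G) by rewrite -g3; apply: xo.
  have jG : j \in intv (val G) by apply: (intv_conv wG g2); rewrite hvj andbT; exact: ltnW.
  have [hwi|hwi|hwi] := ltngtP w i.
  + apply: (two_cycle xa (e1 := G) (e2 := Hc)); rewrite ?xHc ?g3 //.
    * apply: (intv_conv wG jG); rewrite (ltnW hwi); exact: ltnW hij.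
    * by rewrite neq_ltn hwi orbT.
  + have hD : x G == y G.
      apply/negPn/negP => hD; have := hmax hD; by rewrite g3 leqNgt hwi.
    have yG : y G = w by rewrite -(eqP hD) g3.
    apply: (two_cycle ya (e1 := G) (e2 := Hc)); rewrite ?yG ?(F2 hcw) //.
    by rewrite eq_sym.
  + have wi : w = i by apply: val_inj.
    by move/negP: g1; apply; rewrite /chg g3 wi eqxx jG.
- have [hT hc [G [g1 g2 g3 g4]]] := step_common hE hp hl hv'w.
  apply: (IH v') => //.
  rewrite ltn_neqAle eq_sym hv'w /= leqNgt; apply/negP => hlt.
  have wG : w \in intv (val G).
    apply: (intv_conv (a := v') _ g2); first by rewrite -g3; apply: xo.
    by rewrite (ltnW hlt) (ltnW hwv).
  apply: (xcyc (u := w) (v := v')) => //; apply/vrelP; exists G; split => //.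
  by rewrite eq_sym.
Qed.

Lemma aux_gt p v : j < w -> path E' v p -> last v p = w -> v < w -> ~~ T v -> False.
Proof.
move=> jltw; elim: p v => [|v' p IH] v /=; first by move=> _ -> ; rewrite ltnn.
move=> /andP [hE hp] hl hwv hTv.
case: (eqVneq v' w) => hv'w.
- subst v'; case/andP: hE => /EuP [G [g1 g2 g3 g4]] _.
  have hvj : v <= j.
    rewrite leqNgt; apply/negP => hvj; move/negP: hTv; apply; apply/TP; split.
      by rewrite neq_ltn hvj orbT.
    exists Hc; split => //; apply: (intv_conv jHc wHc); lia.
  have wG : w \in intv (val G) by rewrite -g3; apply: xo.
  have jG : j \in intv (val G) by apply: (intv_conv g2 wG); rewrite hvj; exact: ltnW.
  have hD : x G == y G.
    apply/negPn/negP => hD; have := hmax hD; rewrite g3 leqNgt.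
    by rewrite (ltn_trans hij jltw).
  have yG : y G = w by rewrite -(eqP hD) g3.
  apply: (two_cycle ya (e1 := G) (e2 := Hc)); rewrite ?yG ?(F2 hcw) //.
  by rewrite eq_sym.
- have [hT hc [G [g1 g2 g3 g4]]] := step_common hE hp hl hv'w.
  apply: (IH v') => //.
  rewrite ltn_neqAle hv'w /= leqNgt; apply/negP => hlt.
  have wG : w \in intv (val G).
    apply: (intv_conv g2 (b := v')); first by rewrite -g3; apply: xo.
    by rewrite (ltnW hlt) (ltnW hwv).
  apply: (xcyc (u := w) (v := v')) => //; apply/vrelP; exists G; split => //.
  by rewrite neq_ltn hlt.
Qed.

Lemma main_w : connect E' j w -> False.
Proof.
move=> /connectP [p hp hl].
have hTj : ~~ T j by rewrite /T eqxx.
case: (ltngtP w j) => h.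
- exact: (aux_lt h hp (esym hl) h hTj).
- exact: (aux_gt h hp (esym hl) h hTj).
- by move: wj; rewrite (val_inj h) eqxx.
Qed.
End Main.

Lemma key t : T t -> ~~ connect Eu j t.
Proof.
move=> hT; apply/negP => /connectP [p hp hl].
have hTj : ~~ T j by rewrite /T eqxx.
have := first_hit hp hTj; rewrite -hl => /(_ hT) [w [/TP [wj [Hc [hc hw]]] hc2]].
exact: (main_w hc hw wj hc2).
Qed.

Lemma x1a : is_acyclic x1.
Proof.
apply/acyc_vrel => u v huv; apply/negP => hvu.
case: (V1 huv) => [hE|[hT hv]].
- have [h|[t [t1 t2 t3]]] := R3 hvu.
    by apply: (xcyc (Eu_x hE)); apply: (conn_sub Eu_x).
  have c : connect (vrel x1) j t.
    apply: connect_trans (conn_sub Eu_x1 t3) _.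
    exact: connect_trans (connect1 (Eu_x1 hE)) t2.
  have [h|[t' [_ _ h]]] := R3 c; by move/negP: (key t1); apply.
- subst v; have [h|[t' [_ _ h]]] := R3 hvu; by move/negP: (key hT); apply.
Qed.

End Flip.

Section Order.
Variable n : nat.
Variable H : {set 'I_n * 'I_n}.
Notation ori := {ffun edge H -> 'I_n}.

Lemma flip_le (O O' : ori) : incr_flip O O' -> forall e, O e <= O' e.
Proof.
move=> [_ [i [j [hij hh]]]] e; case: (eqVneq (O e) (O' e)) => [->//|hne].
have [h1 h2] := (hh e).1 (elimN eqP hne); rewrite h1 h2; exact: ltnW.
Qed.

Lemma Ple_le (x y : acyc_orient H) : P_le x y -> forall e, sval x e <= sval y e.
Proof.
elim => [a b hf|a|a b c _ h1 _ h2] e.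
- exact: flip_le hf e.
- by [].
- exact: leq_trans (h1 e) (h2 e).
Qed.

Lemma acyc_eq (x y : acyc_orient H) : sval x = sval y -> x = y.
Proof.
case: x => [x px]; case: y => [y py] /= hxy; subst y.
by rewrite (proof_irrelevance _ px py).
Qed.

Lemma le_Ple (x y : acyc_orient H) : (forall e, sval x e <= sval y e) -> P_le x y.
Proof.
move=> hxy.
have : \sum_(e : edge H) (sval y e - sval x e) <= \sum_(e : edge H) (sval y e - sval x e) by [].
move: {2}(\sum_(e : edge H) (sval y e - sval x e)) => m.
elim: m x hxy => [|m IH] x hxy hm.
- have heq : sval x = sval y.
    apply/ffunP => e; apply: val_inj; apply/eqP; rewrite eqn_leq hxy /=.
    have h : sval y e - sval x e <= \sum_(e' : edge H) (sval y e' - sval x e').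
      by rewrite (bigD1 e) //=; exact: leq_addr.
    have := leq_trans h hm; rewrite leqn0 subn_eq0 => ->; done.
  rewrite (acyc_eq heq); exact: rt_refl.
- case: (eqVneq (sval x) (sval y)) => [heq|hne].
    rewrite (acyc_eq heq); exact: rt_refl.
  have [e0 he0] : exists e0, sval x e0 != sval y e0.
    case: (pickP (fun e => sval x e != sval y e)) => [e0 he0|hall]; first by exists e0.
    have hq : sval x = sval y by apply/ffunP => e; apply/eqP; apply/negbFE; exact: hall e.
    by rewrite hq eqxx in hne.
  have [xo xa] := proj2_sig x; have [yo ya] := proj2_sig y.
  set xf := sval x in xo xa hxy hm hne he0 *.
  set yf := sval y in yo ya hxy hm hne he0 *.
  case: (@arg_maxnP _ e0 (fun e => xf e != yf e) (fun e => (xf e : nat)) he0) => ei hDi himax.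
  set i := xf ei.
  have hPi : (xf ei != yf ei) && (xf ei == i) by rewrite hDi eqxx.
  case: (@arg_maxnP _ ei (fun e => (xf e != yf e) && (xf e == i)) (fun e => (yf e : nat)) hPi) => ej /andP [hDej /eqP hxej] hjmax.
  set j := yf ej.
  have hmax' : forall e, xf e != yf e -> xf e <= i by move=> e he; exact: himax.
  have hjmax' : forall e, xf e != yf e -> xf e = i -> yf e <= j.
    move=> e he hi; apply: hjmax; by rewrite he hi eqxx.
  have hyej : yf ej = j by [].
  pose z : acyc_orient H := exist _ (x1 xf i j) (conj (x1o xo i j) (x1a xo yo xa ya hxy hmax' hjmax' hDej hxej hyej)).
  rewrite /P_le; apply: (rt_trans _ _ x z y).
    apply: rt_step => /=; exact: (x1_flip yo xa hxy hDej hxej hyej).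
  apply: (IH z) => /=; first exact: (x1_y xo yo ya hxy hjmax' hDej hxej hyej).
  rewrite -ltnS; apply: leq_trans hm.
  rewrite (bigD1 ej) //= [X in _ < X](bigD1 ej) //=.
  have h1 := x1_ej yo hxy hDej hxej hyej.
  have h2 := x1_y xo yo ya hxy hjmax' hDej hxej hyej ej.
  have h3 : \sum_(e | e != ej) (yf e - x1 xf i j e) <= \sum_(e | e != ej) (yf e - xf e).
    apply: leq_sum => e _; have := x_x1 hxy hDej hxej hyej e; lia.
  rewrite -/yf -addSn; apply: leq_add; [apply: ltn_sub2l => //; exact: leq_trans h1 h2 | exact: h3].
Qed.

Lemma Ple_iff (x y : acyc_orient H) : P_le x y <-> (forall e, sval x e <= sval y e).
Proof. split; [exact: Ple_le | exact: le_Ple]. Qed.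

End Order.

Section Designs.
Variable n : nat.
Variable H : {set 'I_n * 'I_n}.
Hypothesis hI : interval_hypergraph H.
Notation ori := {ffun edge H -> 'I_n}.

Definition mk (f : 'I_n * 'I_n -> 'I_n) : ori := [ffun e => f (val e)].

Definition good_f (f : 'I_n * 'I_n -> 'I_n) (h : 'I_n -> nat) :=
  forall p : 'I_n * 'I_n, p.1 <= p.2 ->
    p.1 <= f p <= p.2 /\
    forall u : 'I_n, p.1 <= u <= p.2 -> (u : nat) != f p -> h u < h (f p).

Lemma edge_le (e : edge H) : (val e).1 <= (val e).2.
Proof. exact: hI.1 _ (valP e). Qed.

Lemma mk_ok f h : good_f f h -> is_orientation (mk f) /\ is_acyclic (mk f).
Proof.
move=> hg; split.
- move=> e; rewrite ffunE in_intv; exact: (hg _ (edge_le e)).1.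
- apply: (acyc_height (h := h)) => e u; rewrite ffunE in_intv => hu hne.
  apply: (hg _ (edge_le e)).2 => //.
Qed.

Definition mkA f h (hg : good_f f h) : acyc_orient H := exist _ (mk f) (mk_ok hg).

Lemma mkA_val f h (hg : good_f f h) e : sval (mkA hg) e = f (val e).
Proof. by rewrite /= ffunE. Qed.

Lemma mk_le f h (hg : good_f f h) f' h' (hg' : good_f f' h') :
  (forall p, p \in H -> f p <= f' p) -> P_le (mkA hg) (mkA hg').
Proof. move=> hle; apply: le_Ple => e; rewrite !mkA_val; apply: hle; exact: valP. Qed.

End Designs.

Ltac solve_good :=
  let p := fresh "p" in let hp := fresh "hp" in let u := fresh "u" in
  let hu := fresh "hu" in let hne := fresh "hne" in
  move=> p hp; split; [ | move=> u hu hne];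
  [ have := ltn_ord p.2; have := ltn_ord p.1
  | have := ltn_ord p.2; have := ltn_ord p.1; have := ltn_ord u; move: hne ];
  rewrite /=; repeat case: ifP; simpl; lia.

Section F1sec.
Variable n : nat.
Variable H : {set 'I_n * 'I_n}.
Hypothesis hI : interval_hypergraph H.
Variables a b c d : 'I_n.
Hypothesis hac : a < c.
Hypothesis hcb : c < b.
Hypothesis hbd : b < d.

Definition fx (p : 'I_n * 'I_n) : 'I_n :=
  if p.1 <= c <= p.2 then c else if p.1 <= b <= p.2 then b else p.2.
Definition hx (u : 'I_n) : nat :=
  if (u : nat) == c then (n + n).+2 else if (u : nat) == b then (n + n).+1 else u.
Definition fy (p : 'I_n * 'I_n) : 'I_n :=
  if p.1 <= a <= p.2 then a else if p.1 <= b <= p.2 then b else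
  if p.1 <= c <= p.2 then c else p.2.
Definition hy (u : 'I_n) : nat :=
  if (u : nat) == a then (n + n).+3 else if (u : nat) == b then (n + n).+2 else
  if (u : nat) == c then (n + n).+1 else u.
Definition fu1 (p : 'I_n * 'I_n) : 'I_n :=
  if (p.1 <= c <= p.2) && (p.2 <= b) then c else p.2.
Definition hu1 (u : 'I_n) : nat := if (u : nat) == c then (b + b).+1 else u + u.
Definition fu2 (p : 'I_n * 'I_n) : 'I_n := if p.1 <= b <= p.2 then b else p.2.
Definition hu2 (u : 'I_n) : nat := if (u : nat) == b then (n + n).+1 else u.

Lemma gx : good_f fx hx. Proof. rewrite /good_f /fx /hx; solve_good. Qed.
Lemma gy : good_f fy hy. Proof. rewrite /good_f /fy /hy; solve_good. Qed.
Lemma gu1 : good_f fu1 hu1. Proof. rewrite /good_f /fu1 /hu1; solve_good. Qed.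
Lemma gu2 : good_f fu2 hu2. Proof. rewrite /good_f /fu2 /hu2; solve_good. Qed.


Hypothesis hno : forall p1 p2 : 'I_n, (p1, p2) \in H -> (p2 : nat) = b -> a < p1 -> p1 <= c -> False.

Lemma le_x_u1 (p : 'I_n * 'I_n) : p.1 <= p.2 -> fx p <= fu1 p.
Proof. rewrite /fx /fu1; move=> hp; repeat (case: ifP => /=); lia. Qed.
Lemma le_x_u2 (p : 'I_n * 'I_n) : p.1 <= p.2 -> fx p <= fu2 p.
Proof. rewrite /fx /fu2; move=> hp; repeat (case: ifP => /=); lia. Qed.
Lemma le_y_u2 (p : 'I_n * 'I_n) : p.1 <= p.2 -> fy p <= fu2 p.
Proof. rewrite /fy /fu2; move=> hp; repeat (case: ifP => /=); lia. Qed.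
Lemma le_y_u1 (p : 'I_n * 'I_n) : p \in H -> fy p <= fu1 p.
Proof.
case: p => p1 p2 pH; have hp := hI.1 _ pH; rewrite /= in hp.
rewrite /fy /fu1 /=; case: ifP => h1; first (case: ifP; lia).
case: ifP => h2.
  case: ifP => h3; last lia.
  exfalso; apply: (hno pH); lia.
repeat (case: ifP => /=); lia.
Qed.

Lemma F1_contra (hA : (a, b) \in H) (hB : (c, d) \in H)
  (join : acyc_orient H -> acyc_orient H -> acyc_orient H)
  (hj : forall x y, is_join (@P_le n H) x y (join x y)) : False.
Proof.
pose X := mkA hI gx; pose Y := mkA hI gy; pose U1 := mkA hI gu1; pose U2 := mkA hI gu2.
have XU1 : P_le X U1 by apply: mk_le => p pH; apply: le_x_u1; exact: hI.1 _ pH.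
have XU2 : P_le X U2 by apply: mk_le => p pH; apply: le_x_u2; exact: hI.1 _ pH.
have YU1 : P_le Y U1 by apply: mk_le => p pH; apply: le_y_u1.
have YU2 : P_le Y U2 by apply: mk_le => p pH; apply: le_y_u2; exact: hI.1 _ pH.
have [jx [jy jl]] := hj X Y.
have zU1 := jl _ XU1 YU1; have zU2 := jl _ XU2 YU2.
pose eA : edge H := exist _ (a, b) hA; pose eB : edge H := exist _ (c, d) hB.
set z := join X Y in jx jy zU1 zU2.
have h1 := Ple_le jx eA; have h2 := Ple_le zU1 eA.
have h3 := Ple_le jy eB; have h4 := Ple_le zU2 eB.
rewrite !mkA_val /= in h1 h2 h3 h4.
move: h1 h2 h3 h4; rewrite /fx /fy /fu1 /fu2 /=.
have e1 : (a <= c <= b) = true by lia.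
have e2 : (c <= a <= d) = false by lia.
have e3 : (c <= b <= d) = true by lia.
have e4 : (b <= b) = true by lia.
rewrite e1 e2 e3 e4 /= => h1 h2 h3 h4.
have zA : sval z eA = c by apply: val_inj; apply/eqP; rewrite eqn_leq h1 h2.
have zB : sval z eB = b by apply: val_inj; apply/eqP; rewrite eqn_leq h3 h4.
have [_ za] := proj2_sig z.
apply: za; exists [:: eA; eB]; split => //=.
rewrite /cyc_step zA zB !in_intv /=.
have -> : (b != c :> 'I_n) by rewrite neq_ltn hcb orbT.
have -> : (c != b :> 'I_n) by rewrite neq_ltn hcb.
rewrite (ltnW (ltn_trans hac hcb)) (ltnW (ltn_trans hcb hbd)) !leqnn //.
Qed.

End F1sec.

Section F1sel.
Variable n : nat.
Variable H : {set 'I_n * 'I_n}.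
Hypothesis hI : interval_hypergraph H.

Lemma F1_full (a0 b c d : 'I_n) : (a0, b) \in H -> (c, d) \in H -> a0 < c -> c < b -> b < d ->
  (c, b) \notin H ->
  forall join : acyc_orient H -> acyc_orient H -> acyc_orient H,
  (forall x y, is_join (@P_le n H) x y (join x y)) -> False.
Proof.
move=> hA hB h1 h2 h3 hcb join hj.
have hP : ((a0, b) \in H) && (a0 < c) by rewrite hA h1.
case: (@arg_maxnP _ a0 (fun k : 'I_n => ((k, b) \in H) && (k < c)) (fun k => (k : nat)) hP).
move=> a /andP [ha hac] hmx.
apply: (F1_contra hI hac h2 h3 _ ha hB hj).
move=> p1 p2 hp hp2 hap1 hp1c.
have e2 : p2 = b by apply: val_inj.
subst p2.
case: (ltngtP p1 c) => hh.
- have := hmx p1; rewrite hp hh /= => /(_ isT); rewrite /geq leqNgt hap1 //.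
- by rewrite ltnNge hp1c in hh.
- have e1 : p1 = c by apply: val_inj.
  by subst p1; rewrite hp in hcb.
Qed.
End F1sel.

Section F2sec.
Variable n : nat.
Variable H : {set 'I_n * 'I_n}.
Hypothesis hI : interval_hypergraph H.
Variables a b c d e f : 'I_n.
Hypothesis hac : a < c.
Hypothesis hcb : c <= b.
Hypothesis hbd : b < d.
Hypothesis hea : e <= a.
Hypothesis hdf : d <= f.

Definition fP (p : 'I_n * 'I_n) : 'I_n := if p.1 <= c <= p.2 then c else p.2.
Definition hP (u : 'I_n) : nat := if (u : nat) == c then (n + n).+1 else u.
Definition fQ1 (p : 'I_n * 'I_n) : 'I_n :=
  if p.1 <= a <= p.2 then a else if p.1 <= d <= p.2 then d else p.2.
Definition hQ1 (u : 'I_n) : nat :=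
  if (u : nat) == a then (n + n).+2 else if (u : nat) == d then (n + n).+1 else u.
Definition fQ2 (p : 'I_n * 'I_n) : 'I_n :=
  if p.1 <= d <= p.2 then d else if p.1 <= a <= p.2 then a else p.2.
Definition hQ2 (u : 'I_n) : nat :=
  if (u : nat) == d then (n + n).+2 else if (u : nat) == a then (n + n).+1 else u.

Lemma gP : good_f fP hP. Proof. rewrite /good_f /fP /hP; solve_good. Qed.
Lemma gQ1 : good_f fQ1 hQ1. Proof. rewrite /good_f /fQ1 /hQ1; solve_good. Qed.
Lemma gQ2 : good_f fQ2 hQ2. Proof. rewrite /good_f /fQ2 /hQ2; solve_good. Qed.

Lemma le_Q1_Q2 (p : 'I_n * 'I_n) : p.1 <= p.2 -> fQ1 p <= fQ2 p.
Proof. rewrite /fQ1 /fQ2; move=> hp; repeat (case: ifP => /=); lia. Qed.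


Lemma Q2_le_Q1 (p : 'I_n * 'I_n) : p.1 <= p.2 ->
  ~~ ((p.1 <= a <= p.2) && (p.1 <= d <= p.2)) -> fQ2 p <= fQ1 p.
Proof. rewrite /fQ1 /fQ2; move=> hp; repeat (case: ifP => /=); lia. Qed.

Lemma P_le_Q1 (p : 'I_n * 'I_n) : p.1 <= p.2 ->
  ~~ ((p.1 <= a <= p.2) && (p.1 <= d <= p.2)) -> fQ1 p <= fQ2 p.
Proof. rewrite /fQ1 /fQ2; move=> hp; repeat (case: ifP => /=); lia. Qed.

Hypothesis hA : (a, b) \in H.
Hypothesis hB : (c, d) \in H.

Lemma F2i (w : {ffun edge H -> 'I_n}) : is_orientation w -> is_acyclic w ->
  (forall e, w e <= fP (val e)) -> (forall e, w e <= fQ2 (val e)) ->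
  forall e, w e <= fQ1 (val e).
Proof.
move=> wo wa h1 h2 ee.
pose eA : edge H := exist _ (a, b) hA.
have wA1 : w eA <= a.
  move: (h2 eA); rewrite /fQ2 /=; repeat (case: ifP => /=); lia.
have wA2 : a <= w eA by move: (wo eA); rewrite in_intv /= => /andP [].
have wA : w eA = a by apply: val_inj; apply/eqP; rewrite eqn_leq wA1 wA2.
have hp := edge_le hI ee.
case hc: (((val ee).1 <= a <= (val ee).2) && ((val ee).1 <= d <= (val ee).2)); last first.
  apply: leq_trans (h2 ee) _; apply: Q2_le_Q1 => //; by rewrite hc.
have -> : fQ1 (val ee) = a by rewrite /fQ1; move: hc => /andP [-> _].
rewrite leqNgt; apply/negP => hlt.
have cin : (val ee).1 <= c <= (val ee).2.
  move: hc => /andP [/andP [x1 x2] /andP [x3 x4]].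
  by rewrite (leq_trans x1 (ltnW hac)) (leq_trans (ltnW (leq_ltn_trans hcb hbd)) x4).
have hpc : w ee <= c by move: (h1 ee); rewrite /fP cin.
apply: (two_cycle wa (e1 := eA) (e2 := ee)).
- rewrite in_intv /=; apply/andP; split; [exact: ltnW | exact: leq_trans hpc hcb].
- by rewrite wA neq_ltn hlt orbT.
- by rewrite wA in_intv; case/andP: hc.
Qed.

Lemma F2ii (w : {ffun edge H -> 'I_n}) : is_orientation w -> is_acyclic w ->
  (forall e, fP (val e) <= w e) -> (forall e, fQ1 (val e) <= w e) ->
  forall e, fQ2 (val e) <= w e.
Proof.
move=> wo wa h1 h2 ee.
pose eB : edge H := exist _ (c, d) hB.
have wB1 : d <= w eB.
  move: (h2 eB); rewrite /fQ1 /=; repeat (case: ifP => /=); lia.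
have wB2 : w eB <= d by move: (wo eB); rewrite in_intv /= => /andP [].
have wB : w eB = d by apply: val_inj; apply/eqP; rewrite eqn_leq wB1 wB2.
have hp := edge_le hI ee.
case hc: (((val ee).1 <= a <= (val ee).2) && ((val ee).1 <= d <= (val ee).2)); last first.
  apply: leq_trans _ (h2 ee); apply: Q2_le_Q1 => //; by rewrite hc.
have -> : fQ2 (val ee) = d by rewrite /fQ2; move: hc => /andP [_ ->].
rewrite leqNgt; apply/negP => hlt.
have cin : (val ee).1 <= c <= (val ee).2.
  move: hc => /andP [/andP [x1 x2] /andP [x3 x4]].
  by rewrite (leq_trans x1 (ltnW hac)) (leq_trans (ltnW (leq_ltn_trans hcb hbd)) x4).
have hpc : c <= w ee by move: (h1 ee); rewrite /fP cin.
apply: (two_cycle wa (e1 := eB) (e2 := ee)).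
- rewrite in_intv /=; apply/andP; split; [exact: hpc | exact: ltnW].
- by rewrite wB neq_ltn hlt.
- by rewrite wB in_intv; case/andP: hc.
Qed.

End F2sec.

Section Antisym.
Variable n : nat.
Variable H : {set 'I_n * 'I_n}.
Lemma Ple_antisym (x y : acyc_orient H) : P_le x y -> P_le y x -> x = y.
Proof.
move=> h1 h2; apply: acyc_eq; apply/ffunP => e; apply: val_inj; apply/eqP.
by rewrite eqn_leq (Ple_le h1) (Ple_le h2).
Qed.
Lemma Ple_refl (x : acyc_orient H) : P_le x x.
Proof. exact: rt_refl. Qed.
Lemma Ple_trans (x y z : acyc_orient H) : P_le x y -> P_le y z -> P_le x z.
Proof. exact: rt_trans. Qed.
End Antisym.

Section F2c.
Variable n : nat.
Variable H : {set 'I_n * 'I_n}.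
Hypothesis hI : interval_hypergraph H.
Variables a b c d e f : 'I_n.
Hypothesis hac : a < c.
Hypothesis hcb : c <= b.
Hypothesis hbd : b < d.
Hypothesis hea : e <= a.
Hypothesis hdf : d <= f.
Hypothesis hA : (a, b) \in H.
Hypothesis hB : (c, d) \in H.
Hypothesis hC : (e, f) \in H.

Lemma F2_contra (meet join : acyc_orient H -> acyc_orient H -> acyc_orient H) :
  (forall x y, is_meet (@P_le n H) x y (meet x y)) ->
  (forall x y, is_join (@P_le n H) x y (join x y)) ->
  (forall x y z, meet x (join y z) = join (meet x y) (meet x z)) -> False.
Proof.
move=> hm hj hd.
pose Q1 := mkA hI (gQ1 hac hcb hbd hea hdf); pose Q2 := mkA hI (gQ2 hac hcb hbd hea hdf); pose Pp := mkA hI (gP hac hcb hbd hea hdf).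
have Q12 : P_le Q1 Q2 by apply: mk_le => p pH; apply: (le_Q1_Q2 hac hcb hbd hea hdf); exact: hI.1 _ pH.
have eq1 : meet Q2 (join Q1 Pp) = Q2.
  have [j1 [j2 _]] := hj Q1 Pp.
  have QJ : P_le Q2 (join Q1 Pp).
    apply: le_Ple => ee; rewrite mkA_val.
    have [wo wa] := proj2_sig (join Q1 Pp).
    apply: (F2ii hI hac hcb hbd hea hdf hA hB wo wa) => e'.
    + by have := Ple_le j2 e'; rewrite mkA_val.
    + by have := Ple_le j1 e'; rewrite mkA_val.
  have [m1 [m2 m3]] := hm Q2 (join Q1 Pp).
  apply: Ple_antisym => //; apply: m3 => //; exact: Ple_refl.
have eq2 : meet Q2 Q1 = Q1.
  have [m1 [m2 m3]] := hm Q2 Q1.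
  apply: Ple_antisym => //; apply: m3 => //; exact: Ple_refl.
have eq3 : join Q1 (meet Q2 Pp) = Q1.
  have [m1 [m2 _]] := hm Q2 Pp.
  have MQ : P_le (meet Q2 Pp) Q1.
    apply: le_Ple => ee; rewrite mkA_val.
    have [wo wa] := proj2_sig (meet Q2 Pp).
    apply: (F2i hI hac hcb hbd hea hdf hA hB wo wa) => e'.
    + by have := Ple_le m2 e'; rewrite mkA_val.
    + by have := Ple_le m1 e'; rewrite mkA_val.
  have [j1 [j2 j3]] := hj Q1 (meet Q2 Pp).
  apply: Ple_antisym => //; apply: j3 => //; exact: Ple_refl.
have := hd Q2 Q1 Pp; rewrite eq1 eq2 eq3 => hQ.
pose eC : edge H := exist _ (e, f) hC.
have := congr1 (fun q : acyc_orient H => (sval q eC : nat)) hQ.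
rewrite /= !ffunE /fQ1 /fQ2 /=.
have -> : (e <= a <= f) = true by apply/andP; split => //; apply: leq_trans (ltnW (ltn_trans hac (leq_ltn_trans hcb hbd))) hdf.
have -> : (e <= d <= f) = true.
  apply/andP; split => //; apply: leq_trans hea (ltnW (ltn_trans hac (leq_ltn_trans hcb hbd))).
move=> hda; move: (ltn_trans hac (leq_ltn_trans hcb hbd)); by rewrite hda ltnn.
Qed.
End F2c.

Definition C1prop n (H : {set 'I_n * 'I_n}) := forall a b c d e f : 'I_n,
  (a, b) \in H -> (c, d) \in H -> a < c -> c <= b -> b < d ->
  (e, f) \in H -> e <= a -> d <= f -> False.
Definition C2prop n (H : {set 'I_n * 'I_n}) := forall a b c d : 'I_n,
  (a, b) \in H -> (c, d) \in H -> a < c -> c < b -> b < d -> (c, b) \in H.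

Section Struct.
Variable n : nat.
Variable H : {set 'I_n * 'I_n}.
Hypothesis hI : interval_hypergraph H.
Hypothesis C1 : C1prop H.
Hypothesis C2 : C2prop H.
Notation ori := {ffun edge H -> 'I_n}.

Definition lo (e : edge H) : 'I_n := (val e).1.
Definition hi (e : edge H) : 'I_n := (val e).2.

Lemma edge_in (K : edge H) : (lo K, hi K) \in H.
Proof. by case: K => [[a b] h]. Qed.

Lemma lo_hi (K : edge H) : lo K <= hi K.
Proof. exact: edge_le hI K. Qed.

Lemma in_e (e : edge H) (k : 'I_n) : (k \in intv (val e)) = (lo e <= k <= hi e).
Proof. by rewrite in_intv. Qed.

Lemma edge_eq (K e : edge H) : lo K = lo e -> hi K = hi e -> K = e.
Proof.
case: K => [[a b] hK]; case: e => [[c d] he]; rewrite /lo /hi /= => h1 h2.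
subst; congr exist; exact: bool_irrelevance.
Qed.

Lemma nest (K K' e : edge H) :
  lo e <= lo K -> hi K <= hi e -> lo e <= lo K' -> hi K' <= hi e ->
  maxn (lo K) (lo K') <= minn (hi K) (hi K') ->
  (lo K <= lo K' /\ hi K' <= hi K) \/ (lo K' <= lo K /\ hi K <= hi K').
Proof.
move=> h1 h2 h3 h4 h5.
case: (leqP (lo K) (lo K')) => l1; case: (leqP (hi K') (hi K)) => l2.
- by left.
- case: (eqVneq (lo K : nat) (lo K')) => l3; first by right; split; lia.
  exfalso; apply: (C1 (edge_in K) (edge_in K') _ _ l2 (edge_in e) h1 h4); lia.
- case: (eqVneq (hi K : nat) (hi K')) => l3; first by right; split; lia.
  exfalso; apply: (C1 (edge_in K') (edge_in K) l1 _ _ (edge_in e) h3 h2); lia.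
- by right; split; lia.
Qed.

Definition bnd (h : 'I_n * 'I_n) (p : nat) : bool :=
  ~~ [exists K : edge H, (val K != h) && (h.1 <= lo K) && (hi K <= h.2) && (lo K <= p) && (p < hi K)].

Definition bidx (h : 'I_n * 'I_n) (v : nat) : nat := \sum_(h.1 <= p < v) (bnd h p : nat).
Definition mH (h : 'I_n * 'I_n) : nat := bidx h h.2.

Lemma bidx_split (h : 'I_n * 'I_n) u v : h.1 <= u -> u <= v ->
  bidx h v = bidx h u + \sum_(u <= p < v) (bnd h p : nat).
Proof. move=> h1 h2; by rewrite /bidx (@big_cat_nat _ _ _ u). Qed.

Lemma bidx_mono (h : 'I_n * 'I_n) u v : u <= v -> bidx h u <= bidx h v.
Proof.
move=> huv; case: (leqP h.1 u) => hu.
  by rewrite (bidx_split hu huv) leq_addr.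
by rewrite /bidx big_geq // ltnW.
Qed.

Lemma bidx_S (h : 'I_n * 'I_n) v : h.1 <= v -> bidx h v.+1 = bidx h v + bnd h v.
Proof. move=> hv; by rewrite /bidx big_nat_recr. Qed.

Lemma bidx_lo (h : 'I_n * 'I_n) : bidx h h.1 = 0.
Proof. by rewrite /bidx big_geq. Qed.

Lemma bidx_ivt_aux (h : 'I_n * 'I_n) m : h.1 + m <= h.2 -> forall k, k <= bidx h (h.1 + m) ->
  exists v : 'I_n, h.1 <= v <= h.1 + m /\ bidx h v = k.
Proof.
elim: m => [|m IH] hm k hk.
  exists h.1; rewrite addn0 leqnn; split => //.
  by move: hk; rewrite addn0 bidx_lo leqn0 => /eqP.
have hm' : h.1 + m <= h.2 by apply: leq_trans hm; rewrite addnS.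
case: (leqP k (bidx h (h.1 + m))) => hk2.
  have [v [v1 v2]] := IH hm' k hk2; exists v; split => //.
  by move: v1; rewrite addnS; lia.
have hv : h.1 + m.+1 < n by apply: leq_ltn_trans hm (ltn_ord _).
exists (Ordinal hv); rewrite /= leq_addr leqnn; split => //.
move: hk hk2; rewrite addnS bidx_S ?leq_addr //; case: (bnd h (h.1 + m)) => /=; lia.
Qed.

Lemma bidx_ivt (h : 'I_n * 'I_n) k : h.1 <= h.2 -> k <= mH h ->
  exists v : 'I_n, h.1 <= v <= h.2 /\ bidx h v = k.
Proof.
move=> hle hk.
have e : h.1 + (h.2 - h.1) = h.2 by rewrite subnKC.
have := @bidx_ivt_aux h (h.2 - h.1); rewrite e => /(_ (leqnn _) k hk) [v [v1 v2]].
by exists v.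
Qed.

Definition sz (e : edge H) : nat := hi e - lo e.

Lemma sz_lt (K e : edge H) : K != e -> lo e <= lo K -> hi K <= hi e -> sz K < sz e.
Proof.
move=> hne h1 h2; rewrite /sz.
have := lo_hi K; have := lo_hi e => l1 l2.
case: (ltngtP (sz K) (sz e)); rewrite /sz => // hh; exfalso.
- lia.
- move/negP: hne; apply; apply/eqP; apply: edge_eq; apply: val_inj => /=; lia.
Qed.

Lemma nbndP (e : edge H) p : ~~ bnd (val e) p ->
  exists K : edge H, [/\ K != e, lo e <= lo K, hi K <= hi e, lo K <= p & p < hi K].
Proof.
rewrite negbK => /existsP [K /andP [/andP [/andP [/andP [a b] c] d] f]].
exists K; split => //.
Qed.

Lemma cover (e : edge H) (u v : nat) : lo e <= u -> u < v -> v <= hi e ->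
  (forall p, u <= p < v -> ~~ bnd (val e) p) ->
  exists K : edge H, [/\ K != e, lo e <= lo K, hi K <= hi e, lo K <= u & v <= hi K].
Proof.
move=> h1 h2 h3 hb.
have main : forall d, u + d < v -> exists K : edge H,
  [/\ K != e, lo e <= lo K, hi K <= hi e, lo K <= u & u + d < hi K].
  elim=> [|d IH] hd.
    have hp : u <= u < v by rewrite leqnn; rewrite addn0 in hd.
    have [K [k1 k2 k3 k4 k5]] := nbndP (hb u hp).
    by exists K; rewrite addn0.
  have hd' : u + d < v by apply: ltn_trans hd; rewrite addnS.
  have [K [k1 k2 k3 k4 k5]] := IH hd'.
  have hp : u <= u + d.+1 < v by rewrite leq_addr.
  have [K' [k1' k2' k3' k4' k5']] := nbndP (hb _ hp).
  have hint : maxn (lo K) (lo K') <= minn (hi K) (hi K').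
    lia.
  case: (nest k2 k3 k2' k3' hint) => [[l1 l2]|[l1 l2]].
  - exists K; split => //; lia.
  - exists K'; split => //; lia.
have hd : u + (v - u).-1 < v by lia.
have [K [k1 k2 k3 k4 k5]] := main _ hd.
exists K; split => //; lia.
Qed.

Definition consistent (O : ori) := forall K e : edge H,
  K != e -> lo e <= lo K -> hi K <= hi e -> O e \in intv (val K) -> O e = O K.

Lemma cons_acyc (O : ori) : is_orientation O -> is_acyclic O -> consistent O.
Proof.
move=> oo oa K e hne h1 h2 hin; apply/eqP/negPn/negP => hne2.
apply: (two_cycle oa (e1 := K) (e2 := e)) => //.
have := oo K; rewrite !in_e => /andP [x1 x2]; apply/andP; split; lia.
Qed.

Lemma bidx_le_iff (x y : ori) : is_orientation x -> is_orientation y -> consistent x -> consistent y ->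
  (forall e, x e <= y e) <-> (forall e, bidx (val e) (x e) <= bidx (val e) (y e)).
Proof.
move=> xo yo xc yc; split.
  by move=> h e; apply: bidx_mono.
move=> h.
have main : forall s (e : edge H), sz e < s -> x e <= y e.
  elim=> [|s IH] e // hs.
  have := xo e; have := yo e; rewrite !in_e => /andP [y1 y2] /andP [x1 x2].
  rewrite leqNgt; apply/negP => hlt.
  have hb := h e.
  have hsplit := bidx_split (h := val e) y1 (ltnW hlt).
  have hz : \sum_(y e <= p < x e) (bnd (val e) p : nat) = 0.
    by move: hb; rewrite hsplit -{2}[bidx _ (y e)]addn0 leq_add2l leqn0 => /eqP.
  have hnb : forall p, y e <= p < x e -> ~~ bnd (val e) p.
    move=> p /andP [p1 p2]; apply/negP => hbp; move: hz.
    have hbp2 : bnd (sval e) p := hbp.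
    rewrite (@big_cat_nat _ _ _ p) //= ?(ltnW p2) // [X in _ + X](@big_ltn _ _ _ p) //= hbp2 /=.
    lia.
  have [K [k1 k2 k3 k4 k5]] := cover y1 hlt x2 hnb.
  have ex : x e = x K by apply: xc => //; rewrite in_e; apply/andP; split; lia.
  have ey : y e = y K by apply: yc => //; rewrite in_e; apply/andP; split; lia.
  have hK : sz K < s by have := sz_lt k1 k2 k3; lia.
  by have := IH K hK; rewrite -ex -ey leqNgt hlt.
move=> e; apply: (main (sz e).+1).
done.
Qed.

Lemma ov_N (A B : edge H) : lo A < lo B -> lo B <= hi A -> hi A < hi B ->
  exists N : edge H, lo N = lo B /\ hi N = hi A.
Proof.
move=> h1 h2 h3.
case: (ltngtP (lo B) (hi A)) => h4.
- have hN := C2 (edge_in A) (edge_in B) h1 h4 h3.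
  by exists (exist (fun h : 'I_n * 'I_n => h \in H) _ hN).
- lia.
- have hN : (lo B, hi A) \in H by rewrite -(val_inj h4); exact: hI.2.
  by exists (exist (fun h : 'I_n * 'I_n => h \in H) _ hN).
Qed.

Section Cyc.
Variable O : ori.
Hypothesis oo : is_orientation O.
Hypothesis oc : consistent O.

Notation S := (cyc_step O).

Lemma oin (e : edge H) : lo e <= O e <= hi e.
Proof. by rewrite -in_e; apply: oo. Qed.

Lemma S_shape e1 e2 : S e1 e2 ->
  [\/ [/\ lo e1 <= lo e2, hi e2 <= hi e1 & e1 != e2],
       lo e2 < lo e1 <= hi e2 /\ hi e2 < hi e1 |
       lo e1 < lo e2 <= hi e1 /\ hi e1 < hi e2].
Proof.
move=> /andP [h1 h2].
have := oin e2; move: h1; rewrite in_e => /andP [i1 i2] /andP [j1 j2].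
have nsub : ~ (lo e2 <= lo e1 /\ hi e1 <= hi e2).
  move=> [s1 s2]; case: (eqVneq e1 e2) => [heq|hne].
    by move: h2; rewrite heq eqxx.
  move/negP: h2; apply; apply/eqP; apply: oc => //; rewrite in_e; lia.
case: (leqP (lo e1) (lo e2)) => l1; case: (leqP (hi e2) (hi e1)) => l2.
- apply: Or31; split => //; apply/negP => /eqP heq; apply: nsub; rewrite heq; lia.
- case: (eqVneq (lo e1 : nat) (lo e2)) => l3; first by exfalso; apply: nsub; lia.
  apply: Or33; lia.
- case: (eqVneq (hi e2 : nat) (hi e1)) => l3; first by exfalso; apply: nsub; lia.
  apply: Or32; lia.
- exfalso; apply: nsub; lia.
Qed.

Lemma same_N (N e1 e2 : edge H) : N != e1 -> N != e2 ->
  lo e1 <= lo N -> hi N <= hi e1 -> lo e2 <= lo N -> hi N <= hi e2 ->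
  O e1 \in intv (val N) -> O e2 \in intv (val N) -> O e1 = O e2.
Proof.
move=> n1 n2 a1 a2 b1 b2 i1 i2.
by rewrite (oc n1 a1 a2 i1) (oc n2 b1 b2 i2).
Qed.

Lemma S_out_r e1 e2 : S e1 e2 -> lo e2 < lo e1 -> lo e1 <= hi e2 -> hi e2 < hi e1 -> hi e2 < O e1.
Proof.
move=> hs h1 h2 h3; move: (hs) => /andP [i1 i2].
have [N [n1 n2]] := ov_N h1 h2 h3.
rewrite ltnNge; apply/negP => hle.
have := oin e1; have := oin e2; move: i1; rewrite in_e => /andP [k1 k2] /andP [k3 k4] /andP [k5 k6].
move/negP: i2; apply; apply/eqP; apply: (@same_N N).
- by apply/negP => /eqP hN; subst N; move: h1; rewrite n1 ltnn.
- by apply/negP => /eqP hN; subst N; move: h3; rewrite n2 ltnn.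
all: rewrite ?in_e ?n1 ?n2; try lia.
Qed.

Lemma S_out_l e1 e2 : S e1 e2 -> lo e1 < lo e2 -> lo e2 <= hi e1 -> hi e1 < hi e2 -> O e1 < lo e2.
Proof.
move=> hs h1 h2 h3; move: (hs) => /andP [i1 i2].
have [N [n1 n2]] := ov_N h1 h2 h3.
rewrite ltnNge; apply/negP => hle.
have := oin e1; have := oin e2; move: i1; rewrite in_e => /andP [k1 k2] /andP [k3 k4] /andP [k5 k6].
move/negP: i2; apply; apply/eqP; apply: (@same_N N).
- by apply/negP => /eqP hN; subst N; move: h3; rewrite n2 ltnn.
- by apply/negP => /eqP hN; subst N; move: h1; rewrite n1 ltnn.
all: rewrite ?in_e ?n1 ?n2; try lia.
Qed.

Definition Rrb (e : edge H) := [exists p : edge H,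
  (lo p < lo e) && (lo e <= hi p) && (hi p < hi e) && (hi p < O e)].
Definition Rlb (e : edge H) := [exists p : edge H,
  (lo e < lo p) && (lo p <= hi e) && (hi e < hi p) && (O e < lo p)].

Ltac c1 X Y Z := apply: (C1 (edge_in X) (edge_in Y) _ _ _ (edge_in Z)).

Lemma Rr_step e1 e2 : S e1 e2 -> Rrb e2 -> Rrb e1 && (hi e2 < hi e1).
Proof.
move=> hs /existsP [p /andP [/andP [/andP [p1 p2] p3] p4]].
have := oin e1; have := oin e2; move: (hs) => /andP [i1 i2].
rewrite in_e in i1 => /andP [k3 k4] /andP [k5 k6].
case: (S_shape hs) => [[s1 s2 s3]|[s1 s2]|[s1 s2]].
- case: (leqP (lo e1) (lo p)) => q1.
    by exfalso; c1 p e2 e1; lia.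
  case: (ltnP (lo e1) (lo e2)) => q2.
    have [N [n1 n2]] := @ov_N p e1 q1 (leq_trans (ltnW q2) p2) (leq_trans p3 s2).
    by exfalso; c1 N e2 e1; rewrite ?n1 ?n2; lia.
  have q3 : lo e1 = lo e2 :> nat by lia.
  have q4 : hi e2 < hi e1.
    rewrite ltn_neqAle s2 andbT; apply/negP => /eqP q4.
    move/negP: s3; apply; apply/eqP; apply: edge_eq; exact: val_inj.
  have q5 : hi e2 < O e1.
    rewrite ltnNge; apply/negP => q5; move/negP: i2; apply; apply/eqP.
    symmetry; apply: oc; rewrite ?in_e; try lia.
    by rewrite eq_sym.
  rewrite q4 andbT; apply/existsP; exists p; apply/andP; split; last lia.
  apply/andP; split; last lia. apply/andP; split; lia.
- case/andP: s1 => s1a s1b; have q := S_out_r hs s1a s1b s2.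
  rewrite s2 andbT; apply/existsP; exists e2; apply/andP; split; last lia.
  apply/andP; split; last lia. apply/andP; split; lia.
- exfalso; case/andP: s1 => s1a s1b.
  have [N [n1 n2]] := @ov_N e1 e2 s1a s1b s2.
  case: (leqP (lo e1) (lo p)) => q1.
    by c1 p N e1; rewrite ?n1 ?n2; lia.
  have hpe1 : hi p < hi e1 by lia.
  have [N' [n1' n2']] := @ov_N p e1 q1 (leq_trans (ltnW s1a) p2) hpe1.
  by c1 N' N e1; rewrite ?n1 ?n2 ?n1' ?n2'; lia.
Qed.

Lemma Rl_step e1 e2 : S e1 e2 -> Rlb e2 -> Rlb e1 && (lo e1 < lo e2).
Proof.
move=> hs /existsP [p /andP [/andP [/andP [p1 p2] p3] p4]].
have := oin e1; have := oin e2; move: (hs) => /andP [i1 i2].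
rewrite in_e in i1 => /andP [k3 k4] /andP [k5 k6].
case: (S_shape hs) => [[s1 s2 s3]|[s1 s2]|[s1 s2]].
- case: (leqP (hi p) (hi e1)) => q1.
    by exfalso; c1 e2 p e1; lia.
  case: (ltnP (hi e2) (hi e1)) => q2.
    have [N [n1 n2]] := @ov_N e1 p (leq_ltn_trans s1 p1) (leq_trans p2 (ltnW q2)) q1.
    by exfalso; c1 e2 N e1; rewrite ?n1 ?n2; lia.
  have q3 : hi e1 = hi e2 :> nat by lia.
  have q4 : lo e1 < lo e2.
    rewrite ltn_neqAle s1 andbT; apply/negP => /eqP q4.
    move/negP: s3; apply; apply/eqP; apply: edge_eq; exact: val_inj.
  have q5 : O e1 < lo e2.
    rewrite ltnNge; apply/negP => q5; move/negP: i2; apply; apply/eqP.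
    symmetry; apply: oc; rewrite ?in_e; try lia.
    by rewrite eq_sym.
  rewrite q4 andbT; apply/existsP; exists p; apply/andP; split; last lia.
  apply/andP; split; last lia. apply/andP; split; lia.
- exfalso; case/andP: s1 => s1a s1b.
  have [N [n1 n2]] := @ov_N e2 e1 s1a s1b s2.
  case: (leqP (hi p) (hi e1)) => q1.
    by c1 N p e1; rewrite ?n1 ?n2; lia.
  have hpe1 : lo e1 < lo p by lia.
  have [N' [n1' n2']] := @ov_N e1 p hpe1 (leq_trans p2 (ltnW s2)) q1.
  by c1 N N' e1; rewrite ?n1 ?n2 ?n1' ?n2'; lia.
- case/andP: s1 => s1a s1b; have q := S_out_l hs s1a s1b s2.
  rewrite s1a andbT; apply/existsP; exists e2; apply/andP; split; last lia.
  apply/andP; split; last lia. apply/andP; split; lia.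
Qed.

Lemma step_sz e1 e2 : S e1 e2 -> ~~ Rrb e1 -> ~~ Rlb e1 -> sz e2 < sz e1.
Proof.
move=> hs hr hl.
have := oin e1; move: (hs) => /andP [i1 i2] /andP [k5 k6].
have [[s1 s2 s3]|hB|hC] := S_shape hs.
- by apply: sz_lt => //; rewrite eq_sym.
  case: hB => /andP [s1a s1b] s2.
  have q := S_out_r hs s1a s1b s2.
  move/negP: hr; case; apply/existsP; exists e2; apply/andP; split; last lia.
  apply/andP; split; last lia. apply/andP; split; lia.
- case: hC => /andP [s1a s1b] s2.
  have q := S_out_l hs s1a s1b s2.
  move/negP: hl; case; apply/existsP; exists e2; apply/andP; split; last lia.
  apply/andP; split; last lia. apply/andP; split; lia.
Qed.

Lemma prop_r p x : path S x p -> Rrb (last x p) -> Rrb x && (hi (last x p) + size p <= hi x).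
Proof.
elim: p x => [|y p IH] x /=; first by move=> _ ->; rewrite addn0 leqnn.
move=> /andP [hxy hp] hl.
have /andP [h1 h2] := IH _ hp hl.
have /andP [h3 h4] := Rr_step hxy h1.
rewrite h3 /= addnS; exact: leq_ltn_trans h2 h4.
Qed.

Lemma prop_l p x : path S x p -> Rlb (last x p) -> Rlb x && (lo x + size p <= lo (last x p)).
Proof.
elim: p x => [|y p IH] x /=; first by move=> _ ->; rewrite addn0 leqnn.
move=> /andP [hxy hp] hl.
have /andP [h1 h2] := IH _ hp hl.
have /andP [h3 h4] := Rl_step hxy h1.
rewrite h3 /= addnS -addSn; apply: leq_trans _ h2; by rewrite leq_add2r.
Qed.

Lemma prop_sz p x : path S x p -> all (fun e => ~~ Rrb e && ~~ Rlb e) (x :: p) ->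
  sz (last x p) + size p <= sz x.
Proof.
elim: p x => [|y p IH] x /=; first by rewrite addn0.
move=> /andP [hxy hp] /andP [/andP [hr hl] ha].
have h1 := IH _ hp ha.
have h2 := step_sz hxy hr hl.
rewrite addnS; exact: leq_ltn_trans h1 h2.
Qed.

Lemma cons_acyclic : is_acyclic O.
Proof.
move=> [s [hs hc]].
case: (boolP (has Rrb s)) => [/hasP [y ys yR]|hR].
  case: (rot_to ys) => i s' hrot.
  have : cycle S (y :: s') by rewrite -hrot rot_cycle.
  rewrite /cycle => hp.
  have := prop_r hp; rewrite last_rcons => /(_ yR) /andP [_]; rewrite size_rcons; lia.
case: (boolP (has Rlb s)) => [/hasP [y ys yR]|hL].
  case: (rot_to ys) => i s' hrot.
  have : cycle S (y :: s') by rewrite -hrot rot_cycle.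
  rewrite /cycle => hp.
  have := prop_l hp; rewrite last_rcons => /(_ yR) /andP [_]; rewrite size_rcons; lia.
case: s hs hc hR hL => [|x p] // _ hc hR hL.
have hp : path S x (rcons p x) := hc.
have ha : all (fun e => ~~ Rrb e && ~~ Rlb e) (x :: rcons p x).
  apply/allP => z; rewrite inE mem_rcons inE orbA orbb => hz.
  have hz' : z \in x :: p by rewrite inE.
  have /hasPn hr := hR; have /hasPn hl := hL; by rewrite (hr z hz') (hl z hz').
have := prop_sz hp ha; rewrite last_rcons size_rcons; lia.
Qed.

End Cyc.

Lemma same_block (e K : edge H) (u w : nat) : K != e -> lo e <= lo K -> hi K <= hi e ->
  lo K <= u <= hi K -> lo K <= w <= hi K -> bidx (val e) u = bidx (val e) w.
Proof.
move=> k1 k2 k3.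
wlog huw : u w / u <= w.
  move=> hw hu hw'; case: (leqP u w) => h; first exact: hw.
  by symmetry; apply: hw => //; exact: ltnW.
move=> /andP [u1 u2] /andP [w1 w2].
have l1 : (val e).1 <= u by rewrite /lo in k2 u1 *; lia.
rewrite (bidx_split l1 huw) big_nat_cond big1 ?addn0 // => p /andP [/andP [p1 p2] _].
apply/eqP; rewrite eqb0 negbK; apply/existsP; exists K.
rewrite k1 k2 k3 /=; apply/andP; split; lia.
Qed.

Section Construct.
Variable t : edge H -> nat.
Hypothesis ht : forall e, t e <= mH (val e).

Definition pickv (e : edge H) : 'I_n :=
  if [pick v : 'I_n | (lo e <= v <= hi e) && (bidx (val e) v == t e)] is Some v then v else lo e.

Lemma pickv_spec e : lo e <= pickv e <= hi e /\ bidx (val e) (pickv e) = t e.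
Proof.
rewrite /pickv; case: pickP => [v /andP [h1 /eqP h2]|hn]; first by [].
exfalso; have [v [v1 v2]] := bidx_ivt (lo_hi e) (ht e).
by move: (hn v); rewrite v1 v2 eqxx.
Qed.

Definition psubv (e K : edge H) (v : nat) : bool :=
  (K != e) && (lo e <= lo K) && (hi K <= hi e) && (lo K <= v <= hi K).

Definition maxsub (e : edge H) (v : nat) : option (edge H) :=
  [pick K | psubv e K v && [forall K', psubv e K' v ==> (lo K <= lo K') && (hi K' <= hi K)]].

Lemma maxsub_none e v : maxsub e v = None -> forall K, ~~ psubv e K v.
Proof.
rewrite /maxsub => hn K; apply/negP => hK.
case: (@arg_maxnP _ K (psubv e ^~ v) sz hK) => K0 h0 hmax.
case: pickP hn => [//|hn _].
move: (hn K0); rewrite h0 /= => /negP; apply; apply/forallP => K'; apply/implyP => h'.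
move: (h0) (h') => /andP [/andP [/andP [a1 a2] a3] a4] /andP [/andP [/andP [b1 b2] b3] b4].
have hint : maxn (lo K0) (lo K') <= minn (hi K0) (hi K') by lia.
case: (nest a2 a3 b2 b3 hint) => [[c1 c2]|[c1 c2]]; first by rewrite c1 c2.
have := hmax K' h'; rewrite /sz => hs.
have e1 : lo K0 = lo K' :> nat by have := lo_hi K'; have := lo_hi K0; lia.
have e2 : hi K0 = hi K' :> nat by have := lo_hi K'; have := lo_hi K0; lia.
by rewrite e1 e2 !leqnn.
Qed.

Lemma maxsub_some e v K : maxsub e v = Some K ->
  psubv e K v /\ forall K', psubv e K' v -> lo K <= lo K' /\ hi K' <= hi K.
Proof.
rewrite /maxsub; case: pickP => [K0 /andP [h1 /forallP h2] [<-]|//].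
split => // K' hK'; move: (h2 K'); rewrite hK' /= => /andP [-> ->]; done.
Qed.

Fixpoint desc (f : nat) (e : edge H) : 'I_n :=
  match f with
  | 0 => lo e
  | f'.+1 => if maxsub e (pickv e) is Some K then desc f' K else pickv e
  end.

Lemma psub_sz e K v : psubv e K v -> sz K < sz e.
Proof. move=> /andP [/andP [/andP [a b] c] _]; exact: sz_lt. Qed.

Lemma desc_fuel f1 f2 e : sz e < f1 -> sz e < f2 -> desc f1 e = desc f2 e.
Proof.
elim: f1 f2 e => [|f1 IH] [|f2] e //= h1 h2.
case hm: (maxsub e (pickv e)) => [K|] //.
have [hK _] := maxsub_some hm; have := psub_sz hK => hs.
apply: IH; lia.
Qed.

Lemma desc_spec f e : sz e < f -> lo e <= desc f e <= hi e /\ bidx (val e) (desc f e) = t e.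
Proof.
elim: f e => [|f IH] e //= hf.
case hm: (maxsub e (pickv e)) => [K|]; last exact: pickv_spec.
have [hK _] := maxsub_some hm.
have hs := psub_sz hK.
have hKf : sz K < f by lia.
have [d1 d2] := IH K hKf.
move: (hK) => /andP [/andP [/andP [a1 a2] a3] a4].
split; first by lia.
have [p1 p2] := pickv_spec e.
rewrite -p2; apply: (same_block a1 a2 a3) => //.
Qed.

Definition Og_f (e : edge H) : 'I_n := desc n e.

Lemma sz_n (e : edge H) : sz e < n.
Proof. rewrite /sz; have := ltn_ord (hi e); lia. Qed.

Lemma Og_spec e : lo e <= Og_f e <= hi e /\ bidx (val e) (Og_f e) = t e.
Proof. exact: desc_spec (sz_n e). Qed.

Lemma Og_unfold e : Og_f e = if maxsub e (pickv e) is Some K then Og_f K else pickv e.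
Proof.
rewrite /Og_f; have hn := sz_n e.
have -> : desc n e = desc n.-1.+1 e by rewrite prednK //; lia.
rewrite /=.
case hm: (maxsub e (pickv e)) => [K|] //.
have [hK _] := maxsub_some hm; have := psub_sz hK => hs.
apply: desc_fuel; have := sz_n K; lia.
Qed.

Definition Og : ori := [ffun e => Og_f e].

Lemma Og_o : is_orientation Og.
Proof. move=> e; rewrite ffunE in_e; exact: (Og_spec e).1. Qed.

Lemma Og_c : consistent Og.
Proof.
have main : forall s (e : edge H), sz e < s -> forall K : edge H,
  K != e -> lo e <= lo K -> hi K <= hi e -> Og_f e \in intv (val K) -> Og_f e = Og_f K.
  elim=> [|s IH] e // hs K k1 k2 k3 k4.
  rewrite Og_unfold in k4 *.
  case hm: (maxsub e (pickv e)) => [K0|]; rewrite hm in k4; last first.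
    have := maxsub_none hm K; rewrite /psubv k1 k2 k3 -in_e k4.
    done.
  have [h0 hmax] := maxsub_some hm.
  move: (h0) => /andP [/andP [/andP [a1 a2] a3] a4].
  have [o1 o2] := Og_spec K0.
  move: (k4); rewrite in_e => /andP [q1 q2].
  have hint : maxn (lo K0) (lo K) <= minn (hi K0) (hi K) by lia.
  case: (nest a2 a3 k2 k3 hint) => [[c1 c2]|[c1 c2]].
  - case: (eqVneq K K0) => [->//|hne].
    apply: (IH K0) => //; first by have := psub_sz h0; lia.
  - have hK : psubv e K (pickv e) by rewrite /psubv k1 k2 k3 /=; lia.
    have [d1 d2] := hmax K hK.
    have -> : K = K0 by apply: edge_eq; apply: val_inj => /=; lia.
    done.
move=> K e k1 k2 k3; rewrite !ffunE => k4.
exact: (main (sz e).+1 e (ltnSn _) K k1 k2 k3 k4).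
Qed.

Lemma Og_a : is_acyclic Og.
Proof. exact: cons_acyclic Og_o Og_c. Qed.

Lemma Og_bidx e : bidx (val e) (Og e) = t e.
Proof. rewrite ffunE; exact: (Og_spec e).2. Qed.

End Construct.

End Struct.

Section Final.
Variable n : nat.
Variable H : {set 'I_n * 'I_n}.
Hypothesis hI : interval_hypergraph H.
Hypothesis C1 : C1prop H.
Hypothesis C2 : C2prop H.

Notation E := (edge H).
Definition kk := #|{: E}|.
Definition ev (i : 'I_kk) : E := enum_val i.
Definition er (e : E) : 'I_kk := enum_rank e.
Lemma evK : cancel ev er. Proof. exact: enum_valK. Qed.
Lemma erK : cancel er ev. Proof. exact: enum_rankK. Qed.

Definition mm (i : 'I_kk) : nat := mH H (val (ev i)).

Lemma F_ok (x : acyc_orient H) i : bidx H (val (ev i)) (sval x (ev i)) < (mm i).+1.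
Proof.
rewrite ltnS /mm /mH; apply: (bidx_mono H).
have := (proj1 (proj2_sig x)) (ev i); rewrite in_intv => /andP [_ ->]; done.
Qed.

Definition FF (x : acyc_orient H) : forall i : 'I_kk, 'I_(mm i).+1 :=
  fun i => Ordinal (F_ok x i).

Section G.
Variable g : forall i : 'I_kk, 'I_(mm i).+1.
Definition tg (e : E) : nat := g (er e).
Lemma tg_le e : tg e <= mH H (val e).
Proof.
rewrite /tg; move: (nat_of_ord (g (er e))) (ltn_ord (g (er e))) => v hv.
have h2 : mm (er e) = mH H (val e) by rewrite /mm erK.
by rewrite h2 in hv.
Qed.
Definition GG : acyc_orient H :=
  exist _ (Og tg) (conj (Og_o hI tg_le) (Og_a hI C1 C2 tg_le)).
End G.

Lemma FG g : FF (GG g) = g.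
Proof.
apply: functional_extensionality_dep => i; apply: val_inj => /=.
rewrite (Og_bidx hI (@tg_le g)) /tg.
have : forall j, j = i -> (g j : nat) = g i by move=> j ->.
apply; exact: evK.
Qed.

Lemma FF_le x y : P_le x y <-> (forall i, FF x i <= FF y i).
Proof.
have [xo xa] := proj2_sig x; have [yo ya] := proj2_sig y.
rewrite Ple_iff (bidx_le_iff hI C1 xo yo (cons_acyc xo xa) (cons_acyc yo ya)).
split => h.
- move=> i; exact: h.
- move=> e; have := h (er e); by rewrite /= erK.
Qed.

Lemma GF x : GG (FF x) = x.
Proof.
apply: Ple_antisym; apply/FF_le => i; by rewrite FG.
Qed.

Lemma iso : iso_product_of_chains (@P_le n H).
Proof.
exists kk, mm, FF; split.
- exists GG; [exact: GF | exact: FG].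
- exact: FF_le.
Qed.

End Final.

Section Generic.
Variable T : Type.
Variable le : relation T.

Lemma iso_distr : iso_product_of_chains le -> distributive_lattice le.
Proof.
move=> [k [m [f [[g fg gf] hle]]]].
have finj : forall x y, (forall i, f x i = f y i) -> x = y.
  move=> x y h; rewrite -(fg x) -(fg y); congr g.
  exact: functional_extensionality_dep.
pose mn (a b : forall i, 'I_(m i).+1) : forall i, 'I_(m i).+1 :=
  fun i => if a i <= b i then a i else b i.
pose mx (a b : forall i, 'I_(m i).+1) : forall i, 'I_(m i).+1 :=
  fun i => if a i <= b i then b i else a i.
have fgi : forall h i, f (g h) i = h i by move=> h i; rewrite gf.
split.
  split; first by move=> x; apply/hle => i.
  split.
    move=> x y /hle h1 /hle h2; apply: finj => i; apply: val_inj; apply/eqP.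
    by rewrite eqn_leq h1 h2.
  move=> x y z /hle h1 /hle h2; apply/hle => i; exact: leq_trans (h1 i) (h2 i).
exists (fun x y => g (mn (f x) (f y))), (fun x y => g (mx (f x) (f y))).
split.
  move=> x y; split; [|split].
  - apply/hle => i; rewrite fgi /mn; case: ifP => //; lia.
  - apply/hle => i; rewrite fgi /mn; case: ifP => //; lia.
  - move=> w /hle h1 /hle h2; apply/hle => i; rewrite fgi /mn; case: ifP => //.
split.
  move=> x y; split; [|split].
  - apply/hle => i; rewrite fgi /mx; case: ifP => //; lia.
  - apply/hle => i; rewrite fgi /mx; case: ifP => //; lia.
  - move=> w /hle h1 /hle h2; apply/hle => i; rewrite fgi /mx; case: ifP => //.
move=> x y z; apply: finj => i; rewrite !fgi /mn /mx !fgi.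
apply: val_inj => /=.
repeat (case: ifP => /=); lia.
Qed.
End Generic.

Unset Implicit Arguments.

Theorem corollary5p32 (n : nat) (H : {set 'I_n * 'I_n}) :
  interval_hypergraph H ->
  (distributive_lattice (@P_le n H) <-> iso_product_of_chains (@P_le n H)).
Proof.
move=> hI; split; last exact: iso_distr.
move=> [_ [meet [join [hm [hj hd]]]]].
have C1 : C1prop H.
  move=> a b c d e f hA hB hac hcb hbd hC hea hdf.
  exact: (F2_contra hI hac hcb hbd hea hdf hA hB hC hm hj hd).
have C2 : C2prop H.
  move=> a b c d hA hB h1 h2 h3; apply/negPn/negP => hcb.
  exact: (F1_full hI hA hB h1 h2 h3 hcb hj).
exact: (iso hI C1 C2).
Qed.
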